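(* Let $X$ be a stacked simplicial complex of dimension $d$ with a fixed stacking order, and let $f_1,\dots,f_p$ with $p\ge 2$ be a path in $X$. Let $f_i$ be the facet of this path which comes last in the stacking order, and let $v$ be its free vertex. Then either $f_i=f_1$ and $\{v\}=f_1\setminus f_2$, or $f_i=f_p$ and $\{v\}=f_p\setminus f_{p-1}$.
   Context: A simplicial complex $X$ on a finite vertex set $V$ is a family of subsets (faces) of $V$ closed under taking subsets, every element of $V$ lying in some face; facets are inclusion-maximal faces. $X$ is pure of dimension $d$ if every facet has $d+1$ elements; a codimension one face is a face with $d$ elements. $X$ is stacked if it is pure of some dimension $d$ and its facets can be ordered $F_0,F_1,\dots,F_k$ (a stacking order) such that for each $p\ge 1$, $F_p$ contains exactly one vertex $v_p$ not in $F_0\cup\dots\cup F_{p-1}$ (called the free vertex of $F_p$), and $F_p\setminus\{v_p\}\subseteq F_j$ for some $j<p$. A walk is a sequence of facets $f_1,\dots,f_p$ ($p\ge 1$) such that each $f_i\cap f_{i+1}$ has exactly $d$ elements; a path is a walk in which the faces $f_i\cap f_{i+1}$, $1\le i<p$, are pairwise distinct; it is a path from $f_1$ to $f_p$. *)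

(* Defs.v *)
From mathcomp Require Import all_boot.
Set Implicit Arguments. Unset Strict Implicit. Unset Printing Implicit Defensive.

Definition is_complex (T : finType) (X : {set {set T}}) : Prop :=
  (forall F G : {set T}, F \in X -> G \subset F -> G \in X) /\
  (forall v : T, exists2 F, F \in X & v \in F).

Definition facet (T : finType) (X : {set {set T}}) (F : {set T}) : bool :=
  (F \in X) && [forall G in X, (F \subset G) ==> (G == F)].

Definition pure (T : finType) (X : {set {set T}}) (d : nat) : Prop :=
  forall F, facet X F -> #|F| = d.+1.

Definition stacking_order (T : finType) (X : {set {set T}}) (s : seq {set T}) : Prop :=
  [/\ uniq s,
      (forall F, facet X F <-> F \in s) &
      (forall p, 0 < p < size s ->
         exists v : T,
           nth set0 s p :\: \bigcup_(j < p) nth set0 s j = [set v] /\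
           exists2 j, j < p & nth set0 s p :\ v \subset nth set0 s j)].

Definition stacked (T : finType) (X : {set {set T}}) (d : nat) : Prop :=
  [/\ is_complex X, pure X d & exists s, stacking_order X s].

Definition free_vertex (T : finType) (s : seq {set T}) (F : {set T}) (v : T) : Prop :=
  v \in F /\ v \notin \bigcup_(j < index F s) nth set0 s j.

Definition walk (T : finType) (X : {set {set T}}) (d : nat) (w : seq {set T}) : Prop :=
  [/\ w != [::], all (facet X) w &
      forall i, i.+1 < size w -> #|nth set0 w i :&: nth set0 w i.+1| = d].

Definition cpath (T : finType) (X : {set {set T}}) (d : nat) (w : seq {set T}) : Prop :=
  walk X d w /\
  uniq [seq nth set0 w i :&: nth set0 w i.+1 | i <- iota 0 (size w).-1].

(* Main.v *)
Require Import Defs.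
From mathcomp Require Import all_boot.

Lemma diff_one (T : finType) (f g : {set T}) v :
  g :&: f = f :\ v -> f :\: g = [set v] -> True.
Proof. by []. Qed.

Lemma diff_one' (T : finType) (f g : {set T}) v :
  v \in f -> v \notin g -> g :&: f = f :\ v -> f :\: g = [set v].
Proof.
move=> vf vg /setP E; apply/setP=> x; have := E x; rewrite !inE.
case: (x =P v) => [->|_] /=; first by rewrite vf (negbTE vg).
by case: (x \in f); rewrite ?andbT ?andbF //= => ->.
Qed.

Theorem lemma2p5 (T : finType) (X : {set {set T}}) (d : nat)
  (s : seq {set T}) (w : seq {set T}) :
  is_complex X -> pure X d -> stacking_order X s ->
  cpath X d w -> 2 <= size w ->
  forall f : {set T}, f \in w ->
  (forall g, g \in w -> index g s <= index f s) ->
  forall v : T, free_vertex s f v ->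
  (f = nth set0 w 0 /\ [set v] = nth set0 w 0 :\: nth set0 w 1) \/
  (f = nth set0 w (size w).-1 /\
   [set v] = nth set0 w (size w).-1 :\: nth set0 w (size w).-2).
Proof.
move=> cX pX [us Hs _] [[wn allw Hw] uw] w2 f fw fmax v [vf vnot].
have fac : forall g, g \in w -> facet X g by move=> g gw; exact: (allP allw).
have fs : f \in s by apply/Hs; exact: fac.
have key : forall g, g \in w -> g != f -> v \notin g.
  move=> g gw gf; have gs : g \in s by apply/Hs; exact: fac.
  have lt : index g s < index f s.
    rewrite ltn_neqAle fmax // andbT; apply/negP=> /eqP E.
    by move/eqP: gf; apply; rewrite -(nth_index set0 gs) E nth_index.
  apply/negP=> vg; move/negP: vnot; apply; apply/bigcupP; exists (Ordinal lt) => //=.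
  by rewrite nth_index.
have cf : #|f| = d.+1 by apply: pX; exact: fac.
have cfv : #|f :\ v| = d.
  by move: cf; rewrite (cardsD1 v f) vf add1n => -[].
have nb : forall g, g \in w -> g != f -> #|g :&: f| = d -> g :&: f = f :\ v.
  move=> g gw gf cg; apply/eqP; rewrite eqEcard cfv cg leqnn andbT.
  apply/subsetP=> x; rewrite !inE => /andP [xg xf]; rewrite xf andbT.
  by apply/negP=> /eqP xv; move: xg; rewrite xv (negbTE (key g gw gf)).
have cons : forall i, i.+1 < size w -> nth set0 w i != nth set0 w i.+1.
  move=> i hi; apply/negP=> /eqP E; have := Hw i hi; rewrite E setIid.
  rewrite (pX _ (fac _ (mem_nth _ hi))) => /eqP; by rewrite -[_ == _]/(d.+1 == d) (gtn_eqF (ltnSn d)).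
set i := index f w.
have iw : i < size w by rewrite index_mem.
have fi : nth set0 w i = f by rewrite nth_index.
case: (posnP i) => [i0|ipos].
  left; have fe : f = nth set0 w 0 by rewrite -fi i0.
  split => //; symmetry; rewrite -fe.
  have w1 : nth set0 w 1 \in w by rewrite mem_nth.
  have w1f : nth set0 w 1 != f by rewrite eq_sym fe cons.
  apply: diff_one' => //; first exact: key.
  by apply: nb => //; rewrite setIC fe; apply: Hw.
have [ilt|ige] := ltnP i.+1 (size w); last first.
  have ieq : i.+1 = size w by apply/eqP; rewrite eqn_leq ige iw.
  right; have ie : i = (size w).-1 by rewrite -ieq.
  have fe : f = nth set0 w (size w).-1 by rewrite -ie.
  split => //; symmetry; rewrite -fe.
  have hs : ((size w).-2).+1 = (size w).-1 by case: (size w) w2 => [|[|n]].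
  have hl : (size w).-2 < size w by case: (size w) w2 => [|[|n]].
  have w1 : nth set0 w (size w).-2 \in w by rewrite mem_nth.
  have w1f : nth set0 w (size w).-2 != f.
    by rewrite fe -hs cons // hs ltn_predL; case: (size w) w2.
  apply: diff_one' => //; first exact: key.
  apply: nb => //; rewrite fe -hs Hw // hs ltn_predL; by case: (size w) w2.
exfalso.
have ip : i.-1.+1 = i by rewrite prednK.
have wa : nth set0 w i.-1 \in w by rewrite mem_nth // (leq_ltn_trans (leq_pred _) iw).
have wb : nth set0 w i.+1 \in w by apply: mem_nth.
have waf : nth set0 w i.-1 != f by rewrite -fi -{2}ip cons // ip.
have wbf : nth set0 w i.+1 != f by rewrite -fi eq_sym cons.
have Ea : nth set0 w i.-1 :&: f = f :\ v.
  by apply: nb => //; rewrite -fi -{2}ip Hw // ip.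
have Eb : nth set0 w i.+1 :&: f = f :\ v.
  by apply: nb => //; rewrite setIC -fi Hw.
set L := [seq nth set0 w k :&: nth set0 w k.+1 | k <- iota 0 (size w).-1].
have sL : size L = (size w).-1 by rewrite size_map size_iota.
have nL : forall k, k < (size w).-1 -> nth set0 L k = nth set0 w k :&: nth set0 w k.+1.
  by move=> k hk; rewrite (nth_map 0) ?size_iota // nth_iota.
have hi : i < (size w).-1 by rewrite -ltnS prednK // (leq_trans _ ilt).
have hi' : i.-1 < (size w).-1 by rewrite (leq_ltn_trans (leq_pred _) hi).
have := @nth_uniq _ set0 L i.-1 i; rewrite sL => /(_ hi' hi uw) H.
move: H; rewrite nL // nL // ip fi Ea setIC Eb eqxx => /esym /eqP.
case: (i) ipos ip => // n _ _ /= E.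
by elim: n E => // n IH [] /IH.
Qed.
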